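(* Let $(A,B,Z,T)$ be a Hopf-Galois system over a field $k$, with structure maps $\alpha,\beta,\gamma,\delta,S$ as in the context. Then $Z$ is an $A$-$B$-biGalois extension, i.e. the linear maps $$\kappa_l=(1_A\otimes m_Z)\circ(\alpha\otimes 1_Z):Z\otimes Z\to A\otimes Z,\qquad \kappa_r=(m_Z\otimes 1_B)\circ(1_Z\otimes\beta):Z\otimes Z\to Z\otimes B$$ are both bijective.
   Context: All tensor products are over a field $k$; $m_X$, $u_X$ denote multiplication and unit of an algebra $X$, $\Delta_X,\varepsilon_X$ comultiplication and counit of a bialgebra $X$. A Hopf-Galois system consists of four non-zero $k$-algebras $(A,B,Z,T)$ such that: (HG1) $A$ and $B$ are bialgebras; (HG2) $Z$ is an $A$-$B$-bicomodule algebra, with left $A$-coaction $\alpha:Z\to A\otimes Z$ and right $B$-coaction $\beta:Z\to Z\otimes B$ (both algebra morphisms, commuting with each other); (HG3) there are algebra morphisms $\gamma:A\to Z\otimes T$ and $\delta:B\to T\otimes Z$ such that $(\gamma\otimes 1_Z)\circ\alpha=(1_Z\otimes\delta)\circ\beta$, $(\alpha\otimes 1_T)\circ\gamma=(1_A\otimes\gamma)\circ\Delta_A$, and $(1_T\otimes\beta)\circ\delta=(\delta\otimes 1_B)\circ\Delta_B$; (HG4) there is a linear map $S:T\to Z$ such that $m_Z\circ(1_Z\otimes S)\circ\gamma=u_Z\circ\varepsilon_A$ and $m_Z\circ(S\otimes 1_Z)\circ\delta=u_Z\circ\varepsilon_B$. *)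

(* Defs.v *)
(* Tensor products over a field k are built concretely:
   V (x) W is the free commutative monoid on symbols v (x) w (lists of pairs,
   up to permutation) modulo the congruence generated by bi-additivity,
   moving scalars across (x), and v (x) 0 = 0 (x) w = 0;  this is the usual
   presentation of V (x)_k W. *)
From HB Require Import structures.
From mathcomp Require Import all_boot all_order all_algebra.
From mathcomp Require Import boolp.
Set Implicit Arguments. Unset Strict Implicit. Unset Printing Implicit Defensive.
Import GRing.Theory.
Local Open Scope ring_scope.
Local Open Scope quotient_scope.

Section Tensor.
Variable k : fieldType.

Section Two.
Variables V W : lmodType k.

Inductive tstep2 : seq (V * W) -> seq (V * W) -> Prop :=
| ts2_addl v v' w : tstep2 [:: (v + v', w)] [:: (v, w); (v', w)]
| ts2_addr v w w' : tstep2 [:: (v, w + w')] [:: (v, w); (v, w')]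
| ts2_scal (c : k) v w : tstep2 [:: (c *: v, w)] [:: (v, c *: w)]
| ts2_zerol w : tstep2 [:: (0, w)] [::]
| ts2_zeror v : tstep2 [:: (v, 0)] [::].

Inductive teq2 : seq (V * W) -> seq (V * W) -> Prop :=
| te2_step s t u x : tstep2 s t -> teq2 (u ++ s ++ x) (u ++ t ++ x)
| te2_perm s t : perm_eq s t -> teq2 s t
| te2_sym s t : teq2 s t -> teq2 t s
| te2_trans s t u : teq2 s t -> teq2 t u -> teq2 s u.

Definition teq2b : rel (seq (V * W)) := fun s t => `[< teq2 s t >].

Lemma teq2b_refl : reflexive teq2b.
Proof. by move=> x; apply/asboolP; apply: te2_perm. Qed.

Lemma teq2b_sym : symmetric teq2b.
Proof.
by move=> x y; apply/idP/idP => /asboolP H; apply/asboolP; apply: te2_sym.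
Qed.

Lemma teq2b_trans : transitive teq2b.
Proof.
move=> y x z /asboolP Hxy /asboolP Hyz; apply/asboolP; exact: te2_trans Hxy Hyz.
Qed.

Definition teq2_rel :=
  EquivRelPack (EquivClass teq2b_refl teq2b_sym teq2b_trans).

Definition tensor2 := {eq_quot teq2_rel}.

Definition tpi2 (s : seq (V * W)) : tensor2 := \pi_tensor2 s.
Definition tpure2 (v : V) (w : W) : tensor2 := tpi2 [:: (v, w)].
Definition tadd2 (s t : tensor2) : tensor2 := tpi2 (repr s ++ repr t).
Definition tscale2 (c : k) (s : tensor2) : tensor2 :=
  tpi2 [seq (c *: p.1, p.2) | p <- repr s].
End Two.

Section Three.
Variables U V W : lmodType k.

Inductive tstep3 : seq (U * V * W) -> seq (U * V * W) -> Prop :=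
| ts3_add1 u u' v w : tstep3 [:: (u + u', v, w)] [:: (u, v, w); (u', v, w)]
| ts3_add2 u v v' w : tstep3 [:: (u, v + v', w)] [:: (u, v, w); (u, v', w)]
| ts3_add3 u v w w' : tstep3 [:: (u, v, w + w')] [:: (u, v, w); (u, v, w')]
| ts3_scal12 (c : k) u v w : tstep3 [:: (c *: u, v, w)] [:: (u, c *: v, w)]
| ts3_scal23 (c : k) u v w : tstep3 [:: (u, c *: v, w)] [:: (u, v, c *: w)]
| ts3_zero1 v w : tstep3 [:: (0, v, w)] [::]
| ts3_zero2 u w : tstep3 [:: (u, 0, w)] [::]
| ts3_zero3 u v : tstep3 [:: (u, v, 0)] [::].

Inductive teq3 : seq (U * V * W) -> seq (U * V * W) -> Prop :=
| te3_step s t u x : tstep3 s t -> teq3 (u ++ s ++ x) (u ++ t ++ x)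
| te3_perm s t : perm_eq s t -> teq3 s t
| te3_sym s t : teq3 s t -> teq3 t s
| te3_trans s t u : teq3 s t -> teq3 t u -> teq3 s u.

Definition teq3b : rel (seq (U * V * W)) := fun s t => `[< teq3 s t >].

Lemma teq3b_refl : reflexive teq3b.
Proof. by move=> x; apply/asboolP; apply: te3_perm. Qed.

Lemma teq3b_sym : symmetric teq3b.
Proof.
by move=> x y; apply/idP/idP => /asboolP H; apply/asboolP; apply: te3_sym.
Qed.

Lemma teq3b_trans : transitive teq3b.
Proof.
move=> y x z /asboolP Hxy /asboolP Hyz; apply/asboolP; exact: te3_trans Hxy Hyz.
Qed.

Definition teq3_rel :=
  EquivRelPack (EquivClass teq3b_refl teq3b_sym teq3b_trans).

Definition tensor3 := {eq_quot teq3_rel}.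
Definition tpi3 (s : seq (U * V * W)) : tensor3 := \pi_tensor3 s.
End Three.

Section TwoAlg.
Variables A B : algType k.
Definition tmul2 (s t : tensor2 A B) : tensor2 A B :=
  tpi2 [seq (p.1 * q.1, p.2 * q.2) | p <- repr s, q <- repr t].
Definition tone2 : tensor2 A B := tpure2 1 1.
End TwoAlg.

(* (f (x) 1_W) : V (x) W -> V1 (x) V2 (x) W  for f : V -> V1 (x) V2 *)
Definition tmap_l (V W V1 V2 : lmodType k) (f : V -> tensor2 V1 V2)
  (s : tensor2 V W) : tensor3 V1 V2 W :=
  tpi3 (flatten [seq [seq (q.1, q.2, p.2) | q <- repr (f p.1)] | p <- repr s]).

(* (1_V (x) g) : V (x) W -> V (x) W1 (x) W2  for g : W -> W1 (x) W2 *)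
Definition tmap_r (V W W1 W2 : lmodType k) (g : W -> tensor2 W1 W2)
  (s : tensor2 V W) : tensor3 V W1 W2 :=
  tpi3 (flatten [seq [seq (p.1, q.1, q.2) | q <- repr (g p.2)] | p <- repr s]).

Definition is_linear_map (V W : lmodType k) (f : V -> W) : Prop :=
  forall (c : k) x y, f (c *: x + y) = c *: f x + f y.

Definition is_alg_morph2 (A B C : algType k) (f : A -> tensor2 B C) : Prop :=
  [/\ forall (c : k) x y, f (c *: x + y) = tadd2 (tscale2 c (f x)) (f y),
      forall x y, f (x * y) = tmul2 (f x) (f y)
    & f 1 = tone2 B C].

Definition is_alg_morph_k (A : algType k) (e : A -> k) : Prop :=
  [/\ forall (c : k) x y, e (c *: x + y) = c * e x + e y,
      forall x y, e (x * y) = e x * e y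
    & e 1 = 1].

Definition is_bialgebra (A : algType k) (D : A -> tensor2 A A) (e : A -> k)
  : Prop :=
  [/\ is_alg_morph2 D, is_alg_morph_k e,
      forall a, tmap_l D (D a) = tmap_r D (D a),
      forall a, \sum_(p <- repr (D a)) e p.1 *: p.2 = a
    &
      forall a, \sum_(p <- repr (D a)) e p.2 *: p.1 = a].

Definition kappa_l (A Z : algType k) (alpha : Z -> tensor2 A Z)
  (s : tensor2 Z Z) : tensor2 A Z :=
  tpi2 (flatten [seq [seq (q.1, q.2 * p.2) | q <- repr (alpha p.1)]
               | p <- repr s]).

Definition kappa_r (B Z : algType k) (beta : Z -> tensor2 Z B)
  (s : tensor2 Z Z) : tensor2 Z B :=
  tpi2 (flatten [seq [seq (p.1 * q.1, q.2) | q <- repr (beta p.2)]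
               | p <- repr s]).

Definition is_hopf_galois_system (A B Z T : algType k)
  (DA : A -> tensor2 A A) (eA : A -> k)
  (DB : B -> tensor2 B B) (eB : B -> k)
  (alpha : Z -> tensor2 A Z) (beta : Z -> tensor2 Z B)
  (gamma : A -> tensor2 Z T) (delta : B -> tensor2 T Z)
  (S : T -> Z) : Prop :=
  [/\
      is_bialgebra DA eA /\ is_bialgebra DB eB,
      (* HG2: Z is an A-B-bicomodule algebra *)
      [/\ is_alg_morph2 alpha /\ is_alg_morph2 beta,
          (forall z, tmap_r alpha (alpha z) = tmap_l DA (alpha z)) /\
          (forall z, \sum_(p <- repr (alpha z)) eA p.1 *: p.2 = z),
          (forall z, tmap_l beta (beta z) = tmap_r DB (beta z)) /\
          (forall z, \sum_(p <- repr (beta z)) eB p.2 *: p.1 = z)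
        &
          forall z, tmap_r beta (alpha z) = tmap_l alpha (beta z)],
      [/\ is_alg_morph2 gamma, is_alg_morph2 delta,
          forall z, tmap_l gamma (alpha z) = tmap_r delta (beta z),
          forall a, tmap_l alpha (gamma a) = tmap_r gamma (DA a)
        & forall b, tmap_r beta (delta b) = tmap_l delta (DB b)]
    &
      [/\ is_linear_map S,
          forall a, \sum_(p <- repr (gamma a)) p.1 * S p.2 = (eA a)%:A
        & forall b, \sum_(p <- repr (delta b)) S p.1 * p.2 = (eB b)%:A]].

End Tensor.

(* Main.v *)
Require Import Defs.
From HB Require Import structures.
From mathcomp Require Import all_boot all_order all_algebra.
From mathcomp Require Import boolp.
From mathcomp Require Import zify.
Set Implicit Arguments. Unset Strict Implicit. Unset Printing Implicit Defensive.
Import GRing.Theory.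
Local Open Scope ring_scope.
Local Open Scope quotient_scope.

Section Gen.
Variable k : fieldType.

Definition lift (X Y : Type) (h : X -> seq Y) (s : seq X) := flatten (map h s).

Lemma lift_cat X Y (h : X -> seq Y) s t : lift h (s ++ t) = lift h s ++ lift h t.
Proof. by rewrite /lift map_cat flatten_cat. Qed.

Lemma lift_cons X Y (h : X -> seq Y) x s : lift h (x :: s) = h x ++ lift h s.
Proof. by []. Qed.

Lemma lift_nil X Y (h : X -> seq Y) : lift h [::] = [::].
Proof. by []. Qed.

Lemma lift_lift X Y Z (g : X -> seq Y) (h : Y -> seq Z) s :
  lift h (lift g s) = lift (fun x => lift h (g x)) s.
Proof. by elim: s => //= x s IH; rewrite lift_cat IH. Qed.

Lemma lift1 X Y (f : X -> Y) s : lift (fun x => [:: f x]) s = map f s.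
Proof. by elim: s => //= x s IH; rewrite -IH. Qed.

Lemma lift_map X Y Z (f : X -> Y) (h : Y -> seq Z) s :
  lift h (map f s) = lift (fun x => h (f x)) s.
Proof. by elim: s => //= x s IH; rewrite lift_cons IH. Qed.

Lemma lift_perm (X Y : eqType) (h : X -> seq Y) s t :
  perm_eq s t -> perm_eq (lift h s) (lift h t).
Proof. by move=> H; apply: perm_flatten; apply: perm_map. Qed.

Lemma lift_ext X Y (h h' : X -> seq Y) s : h =1 h' -> lift h s = lift h' s.
Proof. by move=> E; rewrite /lift (eq_map E). Qed.

Section T2.
Variables V W : lmodType k.
Implicit Types s t u x : seq (V * W).

Lemma teq2_step s t : tstep2 s t -> teq2 s t.
Proof. by move=> H; have := te2_step [::] [::] H; rewrite /= !cats0. Qed.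

Lemma teq2_refl s : teq2 s s.
Proof. exact: te2_perm. Qed.

Lemma teq2_catl u s t : teq2 s t -> teq2 (u ++ s) (u ++ t).
Proof.
elim=> {s t} [s t u' x H| s t H| s t _ IH| s t v _ IH1 _ IH2].
- by have := te2_step (u ++ u') x H; rewrite -!catA.
- by apply: te2_perm; rewrite perm_cat2l.
- exact: te2_sym.
- exact: te2_trans IH1 IH2.
Qed.

Lemma teq2_catr x s t : teq2 s t -> teq2 (s ++ x) (t ++ x).
Proof.
elim=> {s t} [s t u' x' H| s t H| s t _ IH| s t v _ IH1 _ IH2].
- by have := te2_step u' (x' ++ x) H; rewrite -!catA.
- by apply: te2_perm; rewrite perm_cat2r.
- exact: te2_sym.
- exact: te2_trans IH1 IH2.
Qed.

Lemma teq2_cat s s' t t' : teq2 s s' -> teq2 t t' -> teq2 (s ++ t) (s' ++ t').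
Proof.
move=> H1 H2; apply: te2_trans (teq2_catr t H1) _; exact: teq2_catl.
Qed.

Lemma teq2_pi s t : teq2 s t -> tpi2 s = tpi2 t.
Proof. by move=> H; apply/eqmodP; apply/asboolP. Qed.

Lemma pi_teq2 s t : tpi2 s = tpi2 t -> teq2 s t.
Proof. by move=> /eqmodP /asboolP. Qed.

Lemma repr_tpi2 s : teq2 (repr (tpi2 s)) s.
Proof. by apply: pi_teq2; rewrite /tpi2 reprK. Qed.

Lemma tpi2_repr (z : tensor2 V W) : tpi2 (repr z) = z.
Proof. by rewrite /tpi2 reprK. Qed.

Lemma teq2_neg s : teq2 (s ++ [seq (- p.1, p.2) | p <- s]) [::].
Proof.
elim: s => [|[a b] s IH] /=; first exact: teq2_refl.
apply: te2_trans (_ : teq2 ([:: (a, b); (- a, b)] ++ (s ++ [seq (- p.1, p.2) | p <- s])) _).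
  apply: te2_perm; apply/permP => a0 /=; rewrite !count_cat /=; lia.
rewrite -[X in teq2 _ X]cat0s; apply: teq2_cat => //.
apply: te2_trans (te2_sym (teq2_step (ts2_addl _ _ _))) _.
by rewrite subrr; apply: teq2_step; apply: (ts2_zerol _ _).
Qed.

Lemma teq2_cancel s t : teq2 (s ++ t) s -> teq2 t [::].
Proof.
move=> H; set n := [seq (- p.1, p.2) | p <- s].
apply: te2_trans (_ : teq2 (t ++ (s ++ n)) _).
  by rewrite -[X in teq2 X _]cats0; apply: teq2_catl; apply: te2_sym; apply: teq2_neg.
apply: te2_trans (_ : teq2 ((s ++ t) ++ n) _).
  apply: te2_perm; apply/permP => a0 /=; rewrite !count_cat /=; lia.
apply: te2_trans (teq2_catr n H) _; exact: teq2_neg.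
Qed.

Lemma teq2_flat X (h h' : X -> seq (V * W)) (l : seq X) :
  (forall q, teq2 (h q) (h' q)) -> teq2 (lift h l) (lift h' l).
Proof.
move=> H; elim: l => [|q l IH]; first exact: teq2_refl.
by rewrite !lift_cons; apply: teq2_cat.
Qed.

Lemma teq2_interleave X (h h1 h2 : X -> seq (V * W)) (l : seq X) :
  (forall q, teq2 (h q) (h1 q ++ h2 q)) ->
  teq2 (lift h l) (lift h1 l ++ lift h2 l).
Proof.
move=> H; elim: l => [|q l IH]; first exact: teq2_refl.
rewrite !lift_cons; apply: te2_trans (teq2_cat (H q) IH) _.
apply: te2_perm; apply/permP => a0 /=; rewrite !count_cat /=; lia.
Qed.

Lemma teq2_sum_r X (v : V) (f : X -> W) (l : seq X) :
  teq2 [seq (v, f q) | q <- l] [:: (v, \sum_(q <- l) f q)].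
Proof.
elim: l => [|q l IH] /=.
  by rewrite big_nil; apply: te2_sym; apply: teq2_step; apply: (ts2_zeror _ _).
rewrite big_cons; apply: te2_trans (teq2_catl [:: (v, f q)] IH) _.
exact: te2_sym (teq2_step (ts2_addr _ _ _)).
Qed.

Lemma teq2_sum_l X (w : W) (f : X -> V) (l : seq X) :
  teq2 [seq (f q, w) | q <- l] [:: (\sum_(q <- l) f q, w)].
Proof.
elim: l => [|q l IH] /=.
  by rewrite big_nil; apply: te2_sym; apply: teq2_step; apply: (ts2_zerol _ _).
rewrite big_cons; apply: te2_trans (teq2_catl [:: (f q, w)] IH) _.
exact: te2_sym (teq2_step (ts2_addl _ _ _)).
Qed.

Lemma teq2_scal (c : k) (v : V) (w : W) : teq2 [:: (c *: v, w)] [:: (v, c *: w)].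
Proof. exact: teq2_step (ts2_scal _ _ _). Qed.


End T2.

Section Lift2.
Variables V W V' W' : lmodType k.
Variable h : V * W -> seq (V' * W').
Hypotheses
 (H1 : forall v v' w, teq2 (h (v + v', w)) (h (v, w) ++ h (v', w)))
 (H2 : forall v w w', teq2 (h (v, w + w')) (h (v, w) ++ h (v, w')))
 (H3 : forall c v w, teq2 (h (c *: v, w)) (h (v, c *: w)))
 (H4 : forall w, teq2 (h (0, w)) [::])
 (H5 : forall v, teq2 (h (v, 0)) [::]).

Lemma lift_teq2 s t : teq2 s t -> teq2 (lift h s) (lift h t).
Proof.
elim=> {s t} [s t u x H| s t H| s t _ IH| s t v _ IH1 _ IH2].
- rewrite !lift_cat; apply: teq2_catl; apply: teq2_catr.
  by case: H => *; rewrite /lift /= ?cats0.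
- by apply: te2_perm; apply: lift_perm.
- exact: te2_sym.
- exact: te2_trans IH1 IH2.
Qed.
End Lift2.

Section Lift3.
Variables U V W V' W' : lmodType k.
Variable h : U * V * W -> seq (V' * W').
Hypotheses
 (H1 : forall u u' v w, teq2 (h (u + u', v, w)) (h (u, v, w) ++ h (u', v, w)))
 (H2 : forall u v v' w, teq2 (h (u, v + v', w)) (h (u, v, w) ++ h (u, v', w)))
 (H3 : forall u v w w', teq2 (h (u, v, w + w')) (h (u, v, w) ++ h (u, v, w')))
 (H4 : forall c u v w, teq2 (h (c *: u, v, w)) (h (u, c *: v, w)))
 (H5 : forall c u v w, teq2 (h (u, c *: v, w)) (h (u, v, c *: w)))
 (H6 : forall v w, teq2 (h (0, v, w)) [::])
 (H7 : forall u w, teq2 (h (u, 0, w)) [::])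
 (H8 : forall u v, teq2 (h (u, v, 0)) [::]).

Lemma lift_teq3 s t : teq3 s t -> teq2 (lift h s) (lift h t).
Proof.
elim=> {s t} [s t u x H| s t H| s t _ IH| s t v _ IH1 _ IH2].
- rewrite !lift_cat; apply: teq2_catl; apply: teq2_catr.
  by case: H => *; rewrite /lift /= ?cats0.
- by apply: te2_perm; apply: lift_perm.
- exact: te2_sym.
- exact: te2_trans IH1 IH2.
Qed.
End Lift3.

Lemma pi_teq3 (U V W : lmodType k) (s t : seq (U * V * W)) :
  tpi3 s = tpi3 t -> teq3 s t.
Proof. by move=> /eqmodP /asboolP. Qed.

Definition lin2 (V V1 V2 : lmodType k) (f : V -> tensor2 V1 V2) :=
  forall c x y, f (c *: x + y) = tadd2 (tscale2 c (f x)) (f y).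

Section Lin2.
Variables (V V1 V2 : lmodType k) (f : V -> tensor2 V1 V2).
Hypothesis Hf : lin2 f.

Lemma lin_add x y : teq2 (repr (f (x + y))) (repr (f x) ++ repr (f y)).
Proof.
have := Hf 1 x y; rewrite scale1r => ->.
rewrite /tadd2; apply: te2_trans (repr_tpi2 _) _.
apply: teq2_catr; rewrite /tscale2; apply: te2_trans (repr_tpi2 _) _.
rewrite (_ : [seq _ | p <- _] = repr (f x)); first exact: teq2_refl.
by elim: (repr (f x)) => //= [[a b] s ->]; rewrite scale1r.
Qed.

Lemma lin_zero : teq2 (repr (f 0)) [::].
Proof.
apply: (@teq2_cancel _ _ _ (repr (f 0))); apply: te2_sym.
by have := lin_add 0 0; rewrite addr0 => H; exact: H.
Qed.

Lemma lin_scale c x :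
  teq2 (repr (f (c *: x))) [seq (c *: p.1, p.2) | p <- repr (f x)].
Proof.
have := Hf c x 0; rewrite addr0 => ->.
apply: te2_trans (repr_tpi2 _) _.
rewrite -[X in teq2 _ X]cats0; apply: teq2_cat; [exact: repr_tpi2| exact: lin_zero].
Qed.
End Lin2.

End Gen.

Section Gen2.
Variable k : fieldType.

Definition bilin (X Y Z : lmodType k) (mu : X -> Y -> Z) :=
  (forall c a b y, mu (c *: a + b) y = c *: mu a y + mu b y) /\
  (forall c x a b, mu x (c *: a + b) = c *: mu x a + mu x b).

Section Bil.
Variables (X Y Z : lmodType k) (mu : X -> Y -> Z).
Hypothesis Hmu : bilin mu.
Lemma bilDl a b y : mu (a + b) y = mu a y + mu b y.
Proof. by have := proj1 Hmu 1 a b y; rewrite !scale1r. Qed.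
Lemma bilDr x a b : mu x (a + b) = mu x a + mu x b.
Proof. by have := proj2 Hmu 1 x a b; rewrite !scale1r. Qed.
Lemma bil0l y : mu 0 y = 0.
Proof. by apply: (@addrI _ (mu 0 y)); rewrite addr0 -bilDl addr0. Qed.
Lemma bil0r x : mu x 0 = 0.
Proof. by apply: (@addrI _ (mu x 0)); rewrite addr0 -bilDr addr0. Qed.
Lemma bilZl c a y : mu (c *: a) y = c *: mu a y.
Proof. by rewrite -[c *: a]addr0 (proj1 Hmu) bil0l addr0. Qed.
Lemma bilZr c x a : mu x (c *: a) = c *: mu x a.
Proof. by rewrite -[c *: a]addr0 (proj2 Hmu) bil0r addr0. Qed.
End Bil.

Section MapL.
Variables (V1 V2 W W' : lmodType k) (mu : V2 -> W -> W').
Hypothesis Hmu : bilin mu.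

Lemma mapL_teq2 w (s t : seq (V1 * V2)) : teq2 s t ->
  teq2 [seq (q.1, mu q.2 w) | q <- s] [seq (q.1, mu q.2 w) | q <- t].
Proof.
move=> H; rewrite -!(lift1 (fun q : V1 * V2 => (q.1, mu q.2 w))).
apply: lift_teq2 H => [v v' w0|v a b|c v a|a|v] /=.
- exact: teq2_step (ts2_addl _ _ _).
- rewrite (bilDl Hmu); exact: teq2_step (ts2_addr _ _ _).
- rewrite (bilZl Hmu); exact: teq2_step (ts2_scal _ _ _).
- exact: teq2_step (ts2_zerol _ _).
- rewrite (bil0l Hmu); exact: teq2_step (ts2_zeror _ _).
Qed.
End MapL.

Section MapR.
Variables (V V' V1 V2 : lmodType k) (mu : V -> V1 -> V').
Hypothesis Hmu : bilin mu.

Lemma mapR_teq2 v (s t : seq (V1 * V2)) : teq2 s t ->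
  teq2 [seq (mu v q.1, q.2) | q <- s] [seq (mu v q.1, q.2) | q <- t].
Proof.
move=> H; rewrite -!(lift1 (fun q : V1 * V2 => (mu v q.1, q.2))).
apply: lift_teq2 H => [a b w|a w w'|c a w|w|a] /=.
- rewrite (bilDr Hmu); exact: teq2_step (ts2_addl _ _ _).
- exact: teq2_step (ts2_addr _ _ _).
- rewrite (bilZr Hmu); exact: teq2_step (ts2_scal _ _ _).
- rewrite (bil0r Hmu); exact: teq2_step (ts2_zerol _ _).
- exact: teq2_step (ts2_zeror _ _).
Qed.
End MapR.

Lemma teq2_nil_pointwise (V W : lmodType k) X (h : X -> seq (V * W)) l :
  (forall q, teq2 (h q) [::]) -> teq2 (lift h l) [::].
Proof.
move=> H; have := teq2_flat l H.
by rewrite (_ : lift (fun _ => [::]) l = [::]) //; elim: l.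
Qed.

Lemma teq2_mapP (V W : lmodType k) X (f g : X -> V * W) l :
  (forall q, teq2 [:: f q] [:: g q]) -> teq2 (map f l) (map g l).
Proof. by move=> H; rewrite -!lift1; apply: teq2_flat. Qed.

Section HL.
Variables (V W V1 V2 W' : lmodType k) (f : V -> tensor2 V1 V2)
  (mu : V2 -> W -> W').
Hypotheses (Hf : lin2 f) (Hmu : bilin mu).
Definition hL (p : V * W) := [seq (q.1, mu q.2 p.2) | q <- repr (f p.1)].

Lemma hL_teq2 s t : teq2 s t -> teq2 (lift hL s) (lift hL t).
Proof.
apply: lift_teq2 => [v v' w|v w w'|c v w|w|v]; rewrite /hL /=.
- by rewrite -map_cat; apply: mapL_teq2 => //; apply: lin_add.
- rewrite -!(lift1 (fun q : V1 * V2 => (q.1, mu q.2 _))).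
  apply: teq2_interleave => q; rewrite (bilDr Hmu).
  exact: teq2_step (ts2_addr _ _ _).
- apply: te2_trans (mapL_teq2 Hmu w (lin_scale Hf c v)) _.
  rewrite -map_comp; apply: teq2_mapP => q /=; rewrite (bilZr Hmu); exact: teq2_scal.
- by have := mapL_teq2 Hmu w (lin_zero Hf).
- rewrite -(lift1 (fun q : V1 * V2 => (q.1, mu q.2 _))).
  apply: teq2_nil_pointwise => q; rewrite (bil0r Hmu).
  exact: teq2_step (ts2_zeror _ _).
Qed.
End HL.

Section HR.
Variables (V W V1 V2 V' : lmodType k) (f : W -> tensor2 V1 V2)
  (mu : V -> V1 -> V').
Hypotheses (Hf : lin2 f) (Hmu : bilin mu).
Definition hR (p : V * W) := [seq (mu p.1 q.1, q.2) | q <- repr (f p.2)].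

Lemma hR_teq2 s t : teq2 s t -> teq2 (lift hR s) (lift hR t).
Proof.
apply: lift_teq2 => [v v' w|v w w'|c v w|w|v]; rewrite /hR /=.
- rewrite -!(lift1 (fun q : V1 * V2 => (mu _ q.1, q.2))).
  apply: teq2_interleave => q; rewrite (bilDl Hmu).
  exact: teq2_step (ts2_addl _ _ _).
- by rewrite -map_cat; apply: mapR_teq2 => //; apply: lin_add.
- apply: te2_sym; apply: te2_trans (mapR_teq2 Hmu v (lin_scale Hf c w)) _.
  rewrite -map_comp; apply: teq2_mapP => q /=.
  by rewrite (bilZr Hmu) (bilZl Hmu); exact: teq2_refl.
- rewrite -(lift1 (fun q : V1 * V2 => (mu _ q.1, q.2))).
  apply: teq2_nil_pointwise => q; rewrite (bil0l Hmu).
  exact: teq2_step (ts2_zerol _ _).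
- by have := mapR_teq2 Hmu v (lin_zero Hf).
Qed.
End HR.

Section H3.
Variables (U V W V' W' : lmodType k).

Lemma h3L_teq (nu : V -> W -> W') : bilin nu -> forall s t, teq3 s t ->
  teq2 (lift (fun p : U * V * W => [:: (p.1.1, nu p.1.2 p.2)]) s)
       (lift (fun p : U * V * W => [:: (p.1.1, nu p.1.2 p.2)]) t).
Proof.
move=> Hnu s t; apply: lift_teq3 => [u u' v w|u v v' w|u v w w'|c u v w|c u v w|v w|u w|u v] /=.
- exact: teq2_step (ts2_addl _ _ _).
- rewrite (bilDl Hnu); exact: teq2_step (ts2_addr _ _ _).
- rewrite (bilDr Hnu); exact: teq2_step (ts2_addr _ _ _).
- rewrite (bilZl Hnu); exact: teq2_scal.
- by rewrite (bilZl Hnu) (bilZr Hnu); exact: teq2_refl.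
- exact: teq2_step (ts2_zerol _ _).
- rewrite (bil0l Hnu); exact: teq2_step (ts2_zeror _ _).
- rewrite (bil0r Hnu); exact: teq2_step (ts2_zeror _ _).
Qed.

Lemma h3R_teq (nu : U -> V -> V') : bilin nu -> forall s t, teq3 s t ->
  teq2 (lift (fun p : U * V * W => [:: (nu p.1.1 p.1.2, p.2)]) s)
       (lift (fun p : U * V * W => [:: (nu p.1.1 p.1.2, p.2)]) t).
Proof.
move=> Hnu s t; apply: lift_teq3 => [u u' v w|u v v' w|u v w w'|c u v w|c u v w|v w|u w|u v] /=.
- rewrite (bilDl Hnu); exact: teq2_step (ts2_addl _ _ _).
- rewrite (bilDr Hnu); exact: teq2_step (ts2_addl _ _ _).
- exact: teq2_step (ts2_addr _ _ _).
- by rewrite (bilZl Hnu) (bilZr Hnu); exact: teq2_refl.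
- rewrite (bilZr Hnu); exact: teq2_scal.
- rewrite (bil0l Hnu); exact: teq2_step (ts2_zerol _ _).
- rewrite (bil0r Hnu); exact: teq2_step (ts2_zerol _ _).
- exact: teq2_step (ts2_zeror _ _).
Qed.
End H3.

End Gen2.

Lemma lift_fm (X Y Z' W' : Type) (phi : Y -> Z') (g : X -> seq W')
  (psi : X -> W' -> Y) l :
  lift (fun p => [:: phi p]) (flatten [seq [seq psi q r | r <- g q] | q <- l])
  = flatten [seq [seq phi (psi q r) | r <- g q] | q <- l].
Proof.
elim: l => // q l IH.
by rewrite /= lift_cat IH lift1 -map_comp.
Qed.

Theorem theorem1p2 (k : fieldType) (A B Z T : algType k)
  (DA : A -> tensor2 A A) (eA : A -> k)
  (DB : B -> tensor2 B B) (eB : B -> k)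
  (alpha : Z -> tensor2 A Z) (beta : Z -> tensor2 Z B)
  (gamma : A -> tensor2 Z T) (delta : B -> tensor2 T Z)
  (S : T -> Z) :
  is_hopf_galois_system DA eA DB eB alpha beta gamma delta S ->
  bijective (kappa_l alpha) /\ bijective (kappa_r beta).
Proof.
move=> [[HA HB] [[Halpha Hbeta] [Hcoal Hcual] [Hcoar Hcuar] Hcomm]
  [Hgam Hdel Hgd Hag Hbd] [HS HSg HSd]].
case: HA => _ _ _ _ HcuA; case: HB => _ _ _ HcuB _.
have Lal : lin2 alpha by case: Halpha.
have Lbe : lin2 beta by case: Hbeta.
have Lga : lin2 gamma by case: Hgam.
have Lde : lin2 delta by case: Hdel.
have S0 : S 0 = 0.
  have := HS 1 0 0; rewrite !scale1r addr0 => H.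
  by apply: (@addrI _ (S 0)); rewrite addr0 -H.
have SD a b : S (a + b) = S a + S b by rewrite -[a]scale1r HS !scale1r.
have SZ c a : S (c *: a) = c *: S a by rewrite -[c *: a]addr0 HS S0 addr0.
have lift_id (X : Type) (s : seq X) : lift (fun p => [:: p]) s = s.
  by elim: s => // x s IH; rewrite lift_cons IH.
have bZZ : bilin (fun a b : Z => a * b).
  by split=> * /=; rewrite ?mulrDl ?mulrDr -?scalerAl -?scalerAr.
have bTZ : bilin (fun (t : T) (z : Z) => S t * z).
  by split=> * /=; rewrite ?HS ?mulrDl ?mulrDr -?scalerAl -?scalerAr.
have bZT : bilin (fun (z : Z) (t : T) => z * S t).
  by split=> * /=; rewrite ?HS ?mulrDl ?mulrDr -?scalerAl -?scalerAr.
split.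
- pose G (x : tensor2 A Z) : tensor2 Z Z :=
    tpi2 (lift (hL gamma (fun t z => S t * z)) (repr x)).
  exists G => x.
  + rewrite /G -[RHS]tpi2_repr; apply: teq2_pi.
    apply: te2_trans (hL_teq2 Lga bTZ (repr_tpi2 _)) _.
    rewrite lift_lift -[X in teq2 _ X]lift_id; apply: teq2_flat => -[x1 y1].
    rewrite /= lift_map /hL /=.
    have bnu : bilin (fun (t : T) (z : Z) => S t * (z * y1)).
      by split=> * /=; rewrite ?HS ?mulrDl ?mulrDr -?scalerAl -?scalerAr ?mulrDl -?scalerAl -?scalerAr.
    have := h3L_teq (U := Z) bnu (pi_teq3 (Hgd x1)).
    rewrite !lift_fm /= => H; apply: te2_trans H _.
    apply: (te2_trans (t := lift (fun p => [:: (eB p.2 *: p.1, y1)]) (repr (beta x1)))).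
      apply: teq2_flat => p; apply: te2_trans (teq2_sum_r _ _ _) _.
      rewrite (eq_bigr (fun d => S d.1 * d.2 * y1)); last by move=> d _; rewrite mulrA.
      rewrite -big_distrl /= HSd mulr_algl; apply: te2_sym; exact: teq2_scal.
    rewrite lift1; apply: te2_trans (teq2_sum_l _ _ _) _.
    rewrite Hcuar; exact: teq2_refl.
  + rewrite /G -[RHS]tpi2_repr; apply: teq2_pi.
    apply: te2_trans (hL_teq2 Lal bZZ (repr_tpi2 _)) _.
    rewrite lift_lift -[X in teq2 _ X]lift_id; apply: teq2_flat => -[a z].
    rewrite /= lift_map /hL /=.
    have bnu : bilin (fun (y : Z) (t : T) => y * (S t * z)).
      by split=> * /=; rewrite ?HS ?(mulrDl, mulrDr) -?(scalerAl, scalerAr).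
    have := h3L_teq (U := A) bnu (pi_teq3 (Hag a)).
    rewrite !lift_fm /= => H; apply: te2_trans H _.
    apply: (te2_trans (t := lift (fun p => [:: (eA p.2 *: p.1, z)]) (repr (DA a)))).
      apply: teq2_flat => p; apply: te2_trans (teq2_sum_r _ _ _) _.
      rewrite (eq_bigr (fun d => d.1 * S d.2 * z)); last by move=> d _; rewrite mulrA.
      rewrite -big_distrl /= HSg mulr_algl; apply: te2_sym; exact: teq2_scal.
    rewrite lift1; apply: te2_trans (teq2_sum_l _ _ _) _.
    rewrite HcuA; exact: teq2_refl.
- pose G (x : tensor2 Z B) : tensor2 Z Z :=
    tpi2 (lift (hR delta (fun z t => z * S t)) (repr x)).
  exists G => x.
  + rewrite /G -[RHS]tpi2_repr; apply: teq2_pi.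
    apply: te2_trans (hR_teq2 Lde bZT (repr_tpi2 _)) _.
    rewrite lift_lift -[X in teq2 _ X]lift_id; apply: teq2_flat => -[x1 y1].
    rewrite /= lift_map /hR /=.
    have bnu : bilin (fun (y : Z) (t : T) => x1 * y * S t).
      by split=> * /=; rewrite ?HS ?(mulrDl, mulrDr) -?(scalerAl, scalerAr).
    have := h3R_teq (W := Z) bnu (pi_teq3 (Hgd y1)).
    rewrite !lift_fm /= => H; apply: te2_trans (te2_sym H) _.
    apply: (te2_trans (t := lift (fun p => [:: (x1, eA p.1 *: p.2)]) (repr (alpha y1)))).
      apply: teq2_flat => p; apply: te2_trans (teq2_sum_l _ _ _) _.
      rewrite (eq_bigr (fun d => x1 * (d.1 * S d.2))); last by move=> d _; rewrite mulrA.
      rewrite -big_distrr /= HSg mulr_algr; exact: teq2_scal.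
    rewrite lift1; apply: te2_trans (teq2_sum_r _ _ _) _.
    rewrite Hcual; exact: teq2_refl.
  + rewrite /G -[RHS]tpi2_repr; apply: teq2_pi.
    apply: te2_trans (hR_teq2 Lbe bZZ (repr_tpi2 _)) _.
    rewrite lift_lift -[X in teq2 _ X]lift_id; apply: teq2_flat => -[z b].
    rewrite /= lift_map /hR /=.
    have bnu : bilin (fun (t : T) (y : Z) => z * S t * y).
      by split=> * /=; rewrite ?HS ?(mulrDl, mulrDr) -?(scalerAl, scalerAr).
    have := h3R_teq (W := B) bnu (pi_teq3 (Hbd b)).
    rewrite !lift_fm /= => H; apply: te2_trans H _.
    apply: (te2_trans (t := lift (fun p => [:: (z, eB p.1 *: p.2)]) (repr (DB b)))).
      apply: teq2_flat => p; apply: te2_trans (teq2_sum_l _ _ _) _.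
      rewrite (eq_bigr (fun d => z * (S d.1 * d.2))); last by move=> d _; rewrite mulrA.
      rewrite -big_distrr /= HSd mulr_algr; exact: teq2_scal.
    rewrite lift1; apply: te2_trans (teq2_sum_r _ _ _) _.
    rewrite HcuB; exact: teq2_refl.
Qed.
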